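(* Let $G$ be a connected finite simple graph on $n$ vertices, and let $m$ be the maximum multiplicity of the nonzero eigenvalues of the Laplacian matrix $L_G=D_G-A_G$. Then $\mathrm{mur}(G)\le n-m-1$.
   Context: For a finite simple undirected graph $G$ on vertices $v_1,\dots,v_n$, let $A_G$ be its $(0,1)$-adjacency matrix, $D_G=\mathrm{diag}(d_1,\dots,d_n)$ with $d_i$ the degree of $v_i$, $I$ the $n\times n$ identity matrix and $J$ the $n\times n$ all-ones matrix. A universal adjacency matrix of $G$ is any matrix $\alpha A_G+\beta I+\gamma J+\delta D_G$ with real scalars $\alpha,\beta,\gamma,\delta$ and $\alpha\neq 0$. The minimum universal rank $\mathrm{mur}(G)$ is the minimum rank over all universal adjacency matrices of $G$. *)

(* Defs.v *)
From HB Require Import structures.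
From mathcomp Require Import all_boot all_order all_algebra.
From mathcomp Require Import boolp reals.
Set Implicit Arguments. Unset Strict Implicit. Unset Printing Implicit Defensive.
Import Order.TTheory GRing.Theory Num.Theory.
Local Open Scope ring_scope.

Definition simple_graph (n : nat) (e : rel 'I_n) : Prop :=
  irreflexive e /\ symmetric e.

Definition connected_graph (n : nat) (e : rel 'I_n) : Prop :=
  forall i j : 'I_n, connect e i j.

Section Mats.
Variables (R : realType) (n : nat) (e : rel 'I_n).

Definition adjmx : 'M[R]_n := \matrix_(i, j) (e i j)%:R.

Definition deg (i : 'I_n) : nat := #|[pred k | e i k]|.

Definition degmx : 'M[R]_n := \matrix_(i, j) ((i == j)%:R * (deg i)%:R).

Definition laplacian : 'M[R]_n := degmx - adjmx.

Definition univmx (a b c d : R) : 'M[R]_n :=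
  a *: adjmx + b%:M + c *: const_mx 1 + d *: degmx.

Definition univ_rank_pred (k : nat) : bool :=
  `[< exists a b c d : R, a != 0 /\ \rank (univmx a b c d) = k >].

Lemma univ_rank_ex : exists k, univ_rank_pred k.
Proof.
exists (\rank (univmx 1 0 0 0)); apply/asboolP.
by exists 1, 0, 0, 0; split => //; exact: oner_neq0.
Qed.

Definition mur : nat := ex_minn univ_rank_ex.

End Mats.

(* Main.v *)
Require Import Defs.
From HB Require Import structures.
From mathcomp Require Import all_boot all_order all_algebra.
From mathcomp Require Import boolp reals.
From mathcomp Require Import zify.
Import Order.TTheory GRing.Theory Num.Theory.
Local Open Scope ring_scope.

Lemma char_poly_conj (F : fieldType) n (P M : 'M[F]_n) : P \in unitmx ->
  char_poly (invmx P *m M *m P) = char_poly M.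
Proof.
move=> uP.
have Hiso : map_mx polyC (invmx P) *m map_mx polyC P = 1%:M.
  by rewrite -map_mxM mulVmx // map_mx1.
rewrite /char_poly.
have -> : char_poly_mx (invmx P *m M *m P) =
   map_mx polyC (invmx P) *m char_poly_mx M *m map_mx polyC P.
  rewrite /char_poly_mx mulmxBr mulmxBl !map_mxM.
  congr (_ - _).
  by rewrite scalar_mxC -mulmxA Hiso mulmx1.
rewrite !det_mulmx mulrAC -det_mulmx Hiso det1 mul1r.
done.
Qed.

Lemma char_poly_scalar (F : fieldType) p (lam : F) :
  char_poly (lam%:M : 'M_p) = ('X - lam%:P) ^+ p.
Proof.
rewrite char_poly_trig ?scalar_mx_is_trig //.
rewrite (eq_bigr (fun _ => 'X - lam%:P)); last by move=> i _; rewrite mxE eqxx.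
by rewrite prodr_const card_ord.
Qed.

Lemma key (F : fieldType) m (A : 'M[F]_m) (lam : F) p q :
  m = (p + q)%N -> \rank (kermx (A - lam%:M)) = p ->
  (kermx (A - lam%:M) :&: (A - lam%:M) = 0)%MS -> (mup lam (char_poly A) <= p)%N.
Proof.
move=> em; subst m; set B := A - lam%:M => rkK capK.
have rkB : \rank B = q.
  have := mxrank_ker B; have := rank_leq_row B; rewrite rkK; lia.
pose K := castmx (rkK, erefl) (row_base (kermx B)) : 'M_(p, p + q).
pose I := castmx (rkB, erefl) (row_base B) : 'M_(q, p + q).
have eK : (K :=: kermx B)%MS := eqmx_trans (eqmx_cast _ _) (eq_row_base _).
have eI : (I :=: B)%MS := eqmx_trans (eqmx_cast _ _) (eq_row_base _).
pose P := col_mx K I.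
have uP : P \in unitmx.
  rewrite -row_full_unit /row_full -(addsmxE K I).1.
  have := mxrank_sum_cap K I.
  rewrite (cap_eqmx eK eI).1 capK mxrank0 eK.1 eI.1.
  by rewrite rkK rkB addn0 => ->.
have KB : K *m B = 0 by apply/sub_kermxP; rewrite eK.
have [C0 eC0] : exists C0, I *m B = C0 *m I.
  by apply/submxP; apply: submx_trans (submxMl I B) _; rewrite eI.
have PB : P *m B = block_mx 0 0 0 C0 *m P.
  by rewrite /P mul_col_mx KB eC0 /block_mx !mul_col_mx !mul_row_col !mul0mx !add0r.
have PA : A = invmx P *m block_mx (lam%:M) 0 0 (C0 + lam%:M) *m P.
  have -> : block_mx (lam%:M : 'M_p) 0 0 (C0 + lam%:M) = block_mx 0 0 0 C0 + lam%:M.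
    by rewrite [X in _ = _ + X]scalar_mx_block add_block_mx !add0r.
  rewrite mulmxDr mulmxDl -mulmxA -PB mulmxA mulVmx // mul1mx.
  by rewrite scalar_mxC mulmxKV // /B subrK.
rewrite PA char_poly_conj // /char_poly char_block_diag_mx det_ublock.
rewrite -/(char_poly _) -/(char_poly _) char_poly_scalar.
have nev : ~~ eigenvalue (C0 + lam%:M) lam.
  apply/eigenvalueP => -[v hv vn0].
  have vC : v *m C0 = 0.
    by move: hv; rewrite mulmxDr mul_mx_scalar -{2}(add0r (lam *: v)) => /addIr.
  pose w := v *m I.
  have w0 : w == 0.
    rewrite -submx0 -capK sub_capmx; apply/andP; split.
      by apply/sub_kermxP; rewrite /w -mulmxA eC0 mulmxA vC mul0mx.
    by rewrite -eI /w submxMl.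
  have rfI : row_free I by rewrite /row_free eI.1 rkB.
  by move: w0; rewrite /w mulmx_free_eq0 // (negbTE vn0).
rewrite mupM ?expf_neq0 ?polyXsubC_eq0 ?monic_neq0 ?char_poly_monic //.
by rewrite mup_XsubCX eqxx mupNroot ?addn0 // -eigenvalue_root_char.
Qed.

Lemma sym_cap (R : realFieldType) n (B : 'M[R]_n) : B^T = B -> (kermx B :&: B = 0)%MS.
Proof.
move=> sB; apply/eqP; rewrite -submx0; apply/rV_subP => v.
rewrite sub_capmx submx0 => /andP[/sub_kermxP vB /submxP [w ew]].
subst v; set u := w *m B.
have uu : u *m u^T = 0 by rewrite /u trmx_mul sB !mulmxA vB mul0mx.
have : (u *m u^T) 0 0 = 0 by rewrite uu mxE.
rewrite mxE => /psumr_eq0P H.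
apply/eqP/rowP => j; rewrite mxE.
have /eqP := H (fun k _ => ltac:(rewrite !mxE -expr2; exact: sqr_ge0)) j isT.
by rewrite !mxE mulf_eq0 orbb => /eqP.
Qed.

Section G.
Variables (R : realType) (n : nat) (e : rel 'I_n).
Hypothesis sg : simple_graph e.

Lemma lap_sym : (laplacian R e)^T = laplacian R e.
Proof.
case: sg => _ hs; apply/matrixP => i j; rewrite !mxE.
case: (eqVneq i j) => [->|/negbTE nij] //; by rewrite !mul0r hs.
Qed.

Lemma lap_rowsum i : \sum_j laplacian R e i j = 0.
Proof.
under eq_bigr do rewrite !mxE.
rewrite sumrB (bigD1 i) //= eqxx mul1r big1 ?addr0; last first.
  by move=> j; rewrite eq_sym => /negbTE ->; rewrite mul0r.
rewrite -natr_sum /deg -sum1_card big_mkcond /=.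
by apply/eqP; rewrite subr_eq0 eq_sym; apply/eqP; congr _%:R; apply: eq_bigr => k _; rewrite inE; case: (e i k).
Qed.
End G.

Theorem theorem4 (R : realType) (n : nat) (e : rel 'I_n) :
  simple_graph e -> connected_graph e ->
  forall lam : R, lam != 0 -> eigenvalue (laplacian R e) lam ->
  ((mur R e + mup lam (char_poly (laplacian R e))).+1 <= n)%N.
Proof.
move=> sg _ lam lam0 Hev.
set L := laplacian R e.
have n_gt0 : (0 < n)%N.
  move/eigenvalueP: Hev => [v _ vn0]; rewrite lt0n; apply: contraNneq vn0 => n0.
  apply/eqP/rowP => j; exfalso; have := ltn_ord j; move: (nat_of_ord j) => k; by rewrite n0.
set B := L - lam%:M.
have sB : B^T = B by rewrite /B linearB /= tr_scalar_mx (@lap_sym R n e sg).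
have Hmup : (mup lam (char_poly L) <= \rank (kermx B))%N.
  apply: (@key _ n L lam _ (\rank B)) => //; last exact: sym_cap.
  have := mxrank_ker B; have := rank_leq_row B; lia.
pose J := const_mx 1 : 'M[R]_n.
pose c := lam / n%:R.
pose M := B + c *: J.
have murM : (mur R e <= \rank M)%N.
  rewrite /mur; case: ex_minnP => k _; apply; apply/asboolP.
  exists (-1), (-lam), c, 1; split; first by rewrite oppr_eq0 oner_eq0.
  congr (\rank _); rewrite /univmx /M /B /L /laplacian scaleN1r scale1r.
  by rewrite raddfN /= addrC !addrA.
have LJ : L *m J = 0.
  apply/matrixP => i j; rewrite !mxE.
  rewrite /J; under eq_bigr do rewrite [X in _ * X]mxE mulr1.
  exact: (@lap_rowsum R n e i).
pose u := const_mx 1 : 'rV[R]_n.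
have uL : u *m L = 0.
  apply/matrixP => i j; rewrite !mxE.
  rewrite /u; under eq_bigr do rewrite [X in X * _]mxE mul1r.
  rewrite -[RHS](@lap_rowsum R n e j); apply: eq_bigr => k _.
  by have := congr1 (fun M : 'M[R]_n => M j k) (@lap_sym R n e sg); rewrite mxE.
set E := kermx B.
have EL : E *m L = lam *: E.
  by apply/eigenspaceP; rewrite /eigenspace submx_refl.
have EJ : E *m J = 0.
  have : lam *: (E *m J) = 0 by rewrite scalemxAl -EL -mulmxA LJ mulmx0.
  by move/eqP; rewrite scaler_eq0 (negbTE lam0) => /eqP.
have EM : E *m M = 0.
  by rewrite /M /B mulmxDr mulmxBr EL mul_mx_scalar subrr -scalemxAr EJ scaler0 add0r.
have uJ : u *m J = n%:R *: u.
  apply/matrixP => i j; rewrite !mxE.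
  rewrite /u /J; under eq_bigr do rewrite !mxE mulr1.
  by rewrite sumr_const card_ord mulr1.
have nR0 : n%:R != 0 :> R by rewrite pnatr_eq0 -lt0n.
have uM : u *m M = 0.
  rewrite /M /B mulmxDr mulmxBr uL mul_mx_scalar -scalemxAr uJ scalerA.
  by rewrite /c mulfVK // sub0r addNr.
have un0 : u != 0.
  apply/eqP => /matrixP /(_ 0 (Ordinal n_gt0)); rewrite !mxE => /eqP.
  by rewrite oner_eq0.
have uE : ~~ (u <= E)%MS.
  apply/negP => /eigenspaceP; rewrite uL => /esym /eqP.
  by rewrite scaler_eq0 (negbTE lam0) (negbTE un0).
have lt1 : (\rank E < \rank (E + u)%MS)%N.
  by apply: rank_ltmx; rewrite ltmxE addsmxSl /= addsmx_sub submx_refl /=.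
have sub1 : (E + u <= kermx M)%MS.
  by rewrite addsmx_sub; apply/andP; split; apply/sub_kermxP.
have := mxrankS sub1; have := mxrank_ker M; have := rank_leq_row M.
move: Hmup murM lt1; rewrite -/E.
lia.
Qed.
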